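(* Let $d_0<d_1<\cdots$ be the increasing enumeration of $\{m\ge1:\ c_m=0\}$ and $z_n=\left(\frac{d_{4n}+1}{4}-n\right)\bmod 2$ for $n\ge0$. For every integer $m\ge2$ there exists a positive integer $n$ with $m\mid n$ and $z_n=1$.
   Context: For $n\in\mathbb{N}$ let $s_2(n)$ be the sum of the binary digits of $n$ and $t_n=s_2(n)\bmod 2$ (the Prouhet–Thue–Morse sequence). Let $F(X)=\sum_{n\ge1}t_nX^n\in\mathbb{F}_2[[X]]$ and let $G(X)=\sum_{n\ge1}c_nX^n\in\mathbb{F}_2[[X]]$ be its compositional inverse, i.e. $F(G(X))=G(F(X))=X$. The $c_n$ are identified with integers in $\{0,1\}$. The sequence $(d_n)$ is indexed from $0$, so $d_0=3$, and $\frac{d_{4n}+1}{4}$ is always an integer. *)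

(* Defs.v *)
From HB Require Import structures.
From mathcomp Require Import all_boot all_order all_algebra.
Set Implicit Arguments. Unset Strict Implicit. Unset Printing Implicit Defensive.
Import GRing.Theory.
Local Open Scope ring_scope.

(* s_2(n): sum of the binary digits of n; the i-th binary digit is odd (n / 2^i),
   and digits of index > n vanish since n < 2^(n+1). *)
Definition s2 (n : nat) : nat := (\sum_(i < n.+1) odd (n %/ 2 ^ i))%N.

Definition tm (n : nat) : 'F_2 := (s2 n)%:R.

Definition Ftrunc (N : nat) : {poly 'F_2} :=
  \poly_(i < N.+1) (if i is 0 then 0 else tm i).

Definition Gtrunc (c : nat -> 'F_2) (N : nat) : {poly 'F_2} :=
  \poly_(i < N.+1) (if i is 0 then 0 else c i).

(* G = sum_{n>=1} c_n X^n is the compositional inverse of F in F_2[[X]]: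
   F(G(X)) = X and G(F(X)) = X.  Since F and G have no constant term, the
   coefficient of X^N in the composition only depends on the truncations to
   degree N. *)
Definition is_comp_inverse (c : nat -> 'F_2) : Prop :=
  forall N : nat,
    (Gtrunc c N \Po Ftrunc N)`_N = (N == 1%N)%:R /\
    (Ftrunc N \Po Gtrunc c N)`_N = (N == 1%N)%:R.

Definition is_zero_enum (c : nat -> 'F_2) (d : nat -> nat) : Prop :=
  (forall n, (d n < d n.+1)%N) /\
  (forall m : nat, ((1 <= m)%N /\ c m = 0) <-> exists n, d n = m).

Definition zseq (d : nat -> nat) (n : nat) : nat :=
  (((d (4 * n) + 1) %/ 4 - n) %% 2)%N.

(* Main.v *)
Require Import Defs.
From HB Require Import structures.
From mathcomp Require Import all_boot all_order all_algebra.
From mathcomp Require Import ring zify.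
Set Implicit Arguments. Unset Strict Implicit. Unset Printing Implicit Defensive.
Import GRing.Theory.

Section Cong.
Local Open Scope ring_scope.
Local Notation P := {poly 'F_2}.

Lemma two0 : (2%:R : P) = 0.
Proof. rewrite -polyC_natr. have -> : (2%:R : 'F_2) = 0 by apply/eqP. by rewrite polyC0. Qed.

Lemma add2 (x : P) : x + x = 0.
Proof. by rewrite -mulr2n -mulr_natl two0 mul0r. Qed.

Lemma add2F (a : 'F_2) : a + a = 0.
Proof. by case: a => -[|[|m]] i; apply/val_inj. Qed.

Lemma sqF (a : 'F_2) : a * a = a.
Proof. by case: a => -[|[|m]] i; apply/val_inj. Qed.

Lemma eqF2 (a b : 'F_2) : a + b = 0 -> a = b.
Proof. move=> E. by rewrite -[a]addr0 -(add2F b) addrA E add0r. Qed.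

Lemma oppP (x : P) : - x = x.
Proof. by apply/eqP; rewrite eq_sym -subr_eq0 opprK add2. Qed.

Definition cong n (p q : P) := forall i, (i < n)%N -> p`_i = q`_i.

Lemma congP n p q : cong n p q <-> exists h, p = q + 'X^n * h.
Proof.
split.
- move=> H; exists (drop_poly n (p - q)).
  have E := poly_take_drop n (p - q).
  have T : take_poly n (p - q) = 0.
    apply/polyP => i; rewrite coefE coef0 coefB.
    by case: ifP => // /H ->; rewrite subrr.
  by rewrite T add0r mulrC in E; rewrite E addrC subrK.
- by case=> h -> i lin; rewrite coefD coefXnM lin addr0.
Qed.

Lemma cong_refl n p : cong n p p. Proof. by []. Qed.
Lemma cong_sym n p q : cong n p q -> cong n q p.
Proof. by move=> H i /H. Qed.
Lemma cong_trans n p q r : cong n p q -> cong n q r -> cong n p r.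
Proof. by move=> H1 H2 i li; rewrite H1 // H2. Qed.
Lemma cong_le m n p q : (m <= n)%N -> cong n p q -> cong m p q.
Proof. by move=> mn H i li; apply: H; apply: leq_trans li mn. Qed.
Lemma cong_add n p q p' q' : cong n p q -> cong n p' q' -> cong n (p + p') (q + q').
Proof. by move=> H1 H2 i li; rewrite !coefD H1 // H2. Qed.
Lemma cong_mul n p q p' q' : cong n p q -> cong n p' q' -> cong n (p * p') (q * q').
Proof.
move=> /congP [h ->] /congP [h' ->]; apply/congP.
exists (h * q' + q * h' + 'X^n * h * h'); ring.
Qed.
Lemma cong_exp n p q k : cong n p q -> cong n (p ^+ k) (q ^+ k).
Proof. move=> H; elim: k => [|k IH]; first by []. by rewrite !exprS; apply: cong_mul. Qed.

Lemma cong0 n p q : cong n (p + q) 0 <-> cong n p q.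
Proof.
split=> H i li; move: (H i li); rewrite !coefE.
- by move=> E; apply: eqF2.
- by move->; rewrite add2F.
Qed.

Lemma Xfactor (r : P) : r`_0 = 0 -> r = 'X * drop_poly 1 r.
Proof.
move=> r0; have E := poly_take_drop 1 r.
have T : take_poly 1 r = 0.
  by apply/polyP => i; rewrite coefE coef0; case: i.
by rewrite T add0r expr1 mulrC in E.
Qed.

Lemma cong_compl n (p q r : P) : r`_0 = 0 -> cong n p q -> cong n (p \Po r) (q \Po r).
Proof.
move=> r0 /congP [h ->]; apply/congP.
rewrite (Xfactor r0) comp_polyD comp_polyM comp_Xn_poly exprMn.
by eexists; rewrite -mulrA.
Qed.

Lemma cong_compr n (p r r' : P) : cong n r r' -> cong n (p \Po r) (p \Po r').
Proof.
move=> /congP [h ->]; apply/congP.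
rewrite !comp_polyE.
exists (\sum_(i < size p) p`_i *: (h * \sum_(j < i) (r' + 'X^n * h) ^+ (i.-1 - j) * r' ^+ j)).
rewrite mulr_sumr -big_split /=; apply: eq_bigr => i _.
rewrite -scalerAr -scalerDr; congr (_ *: _).
rewrite mulrA; apply/eqP; rewrite -subr_eq addrC.
have E := subrXX (r' + 'X^n * h) r' i.
have E2 : r' + 'X^n * h - r' = 'X^n * h by rewrite addrC addKr.
rewrite E2 in E; rewrite -E.
by rewrite opprB subrK.
Qed.

Lemma cong_X n (a b : P) : cong n.+1 ('X * a) ('X * b) -> cong n a b.
Proof. move=> H i li; move: (H i.+1 li); by rewrite !coefXM. Qed.

Lemma cong_cancel n (u D : P) : u`_0 = 1 -> cong n (u * D) 0 -> cong n D 0.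
Proof.
move=> u0 H; elim/ltn_ind => i IH lin.
move: (H i lin); rewrite coefM big_ord_recl u0 mul1r subn0 coef0.
rewrite big1 ?addr0 // => j _.
rewrite IH ?coef0 ?mulr0 //= /bump /=.
- have := ltn_ord j; lia.
- have := ltn_ord j; lia.
Qed.

End Cong.

Section Frob.
Local Open Scope ring_scope.
Local Notation P := {poly 'F_2}.

Lemma sqrD2 (x y : P) : (x + y) ^+ 2 = x ^+ 2 + y ^+ 2.
Proof.
have -> : (x + y) ^+ 2 = x ^+ 2 + y ^+ 2 + 2%:R * (x * y) by ring.
by rewrite two0 mul0r addr0.
Qed.

Lemma sqr_sum n (F : 'I_n -> P) : (\sum_(i < n) F i) ^+ 2 = \sum_(i < n) (F i) ^+ 2.
Proof.
elim: n F => [|n IH] F; first by rewrite !big_ord0 expr0n.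
by rewrite !big_ord_recr /= sqrD2 IH.
Qed.

Lemma comp_sqr (p r : P) : (p \Po r) ^+ 2 = p \Po (r ^+ 2).
Proof.
rewrite !comp_polyE sqr_sum; apply: eq_bigr => i _.
rewrite exprZn -exprM mulnC exprM; congr (_ *: _).
by rewrite expr2 sqF.
Qed.

Lemma comp_4 (p r : P) : (p \Po r) ^+ 4 = p \Po (r ^+ 4).
Proof.
by rewrite (_ : 4 = 2 * 2)%N // !exprM !comp_sqr.
Qed.

Lemma one4 (x : P) : (1 + x) ^+ 4 = 1 + x ^+ 4.
Proof. by rewrite (_ : 4 = 2 * 2)%N // !exprM !sqrD2 !expr1n. Qed.

Lemma one8 (x : P) : (1 + x) ^+ 8 = 1 + x ^+ 8.
Proof. by rewrite (_ : 8 = 4 * 2)%N // !exprM one4 sqrD2 expr1n. Qed.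

Lemma cube1 (x : P) : (1 + x) ^+ 3 = 1 + x + x ^+ 2 + x ^+ 3.
Proof.
have -> : (1 + x) ^+ 3 = 1 + x + x ^+ 2 + x ^+ 3 + 2%:R * (x + x ^+ 2) by ring.
by rewrite two0 mul0r addr0.
Qed.

Lemma sq1 (x : P) : (1 + x) ^+ 2 = 1 + x ^+ 2.
Proof. by rewrite sqrD2 expr1n. Qed.

Lemma pow4D (x y : P) : (x + y) ^+ 4 = x ^+ 4 + y ^+ 4.
Proof. by rewrite (_ : 4 = 2 * 2)%N // !exprM !sqrD2. Qed.

End Frob.

Lemma s2_wide B n : (n < B)%N -> s2 n = (\sum_(i < B) odd (n %/ 2 ^ i))%N.
Proof.
move=> nB; rewrite /s2 (big_ord_widen B (fun i => odd (n %/ 2 ^ i) : nat) nB).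
rewrite big_mkcond; apply: eq_bigr => i _.
case: ifP => // /negbT; rewrite -leqNgt => ni.
rewrite divn_small //; apply: leq_trans (ltn_expl n (isT : 1 < 2)) _.
by rewrite leq_exp2l //; apply: ltnW.
Qed.

Lemma s2_even q : s2 (2 * q) = s2 q.
Proof.
rewrite (s2_wide (ltnW (ltnSn (2 * q).+1))) big_ord_recl /= expn0 divn1.
rewrite oddM /= add0n (s2_wide (_ : q < (2 * q).+1)%N); last by lia.
apply: eq_bigr => i _; rewrite /bump /= add1n expnS divnMl //.
Qed.

Lemma s2_odd q : s2 (2 * q).+1 = (s2 q).+1.
Proof.
rewrite (s2_wide (ltnSn (2 * q).+1)) big_ord_recl /= expn0 divn1.
rewrite /= oddM /= add1n (s2_wide (_ : q < (2 * q).+1)%N); last by lia.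
congr (_.+1); apply: eq_bigr => i _; rewrite /bump /= add1n expnS divnMA.
by rewrite (_ : (2 * q).+1 %/ 2 = q)%N //; lia.
Qed.

Section TM.
Local Open Scope ring_scope.

Lemma tm_even q : tm (2 * q) = tm q.
Proof. by rewrite /tm s2_even. Qed.
Lemma tm_odd q : tm (2 * q).+1 = 1 + tm q.
Proof. by rewrite /tm s2_odd mulrS. Qed.
Lemma tm0 : tm 0%N = 0.
Proof. by rewrite /tm /s2 big_ord1. Qed.
Lemma tm1 : tm 1%N = 1.
Proof. by have := tm_odd 0%N; rewrite tm0 addr0. Qed.

Lemma Fcoef K i : (Ftrunc K)`_i = if (i <= K)%N then tm i else 0.
Proof. rewrite /Ftrunc coef_poly ltnS. case: i => [|i] //. by rewrite tm0 leq0n. Qed.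

Lemma F0 K : (Ftrunc K)`_0%N = 0.
Proof. by rewrite Fcoef tm0 leq0n. Qed.

End TM.

Section TMcong.
Local Open Scope ring_scope.

Lemma half_cases i : exists k, (i = 2 * k \/ i = (2 * k).+1)%N.
Proof. exists (i %/ 2)%N; lia. Qed.

Lemma qcoefE K k : (Ftrunc K \Po 'X^2)`_(2 * k) = (Ftrunc K)`_k.
Proof. by rewrite coef_comp_poly_Xn // dvdn_mulr // mulKn. Qed.

Lemma qcoefO K k : (Ftrunc K \Po 'X^2)`_((2 * k).+1) = 0.
Proof. rewrite coef_comp_poly_Xn // dvdn2 /= oddM /=. by []. Qed.

Lemma TMcong K : cong K.+1 ((1 + 'X^2) * Ftrunc K)
  ((1 + 'X + 'X^2 + 'X^3) * (Ftrunc K \Po 'X^2) + 'X).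
Proof.
move=> i iK; rewrite !mulrDl !mul1r !coefD !coefXnM !coefXM coefX.
have fE j : (j <= K)%N -> (Ftrunc K)`_j = tm j by move=> jK; rewrite Fcoef jK.
have [k [Ei | Ei]] := half_cases i; subst i.
- case: k iK => [|k] iK.
  + by rewrite qcoefE muln0 /= !F0 !addr0.
  + have -> : (2 * k.+1 < 2)%N = false by lia.
    have -> : (2 * k.+1 == 0)%N = false by lia.
    have -> : (2 * k.+1 == 1)%N = false by lia.
    have -> : (2 * k.+1 - 2 = 2 * k)%N by lia.
    have -> : (2 * k.+1).-1 = (2 * k).+1 by lia.
    rewrite !qcoefE qcoefO /= mulr0n !addr0 (fE (2 * k.+1)%N) ?(fE (2 * k)%N)
      ?(fE k.+1) ?(fE k); try lia.
    rewrite !tm_even.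
    case: k iK => [|k] iK; first by rewrite /= !addr0.
    have -> : (2 * k.+2 < 3)%N = false by lia.
    have -> : (2 * k.+2 - 3 = (2 * k).+1)%N by lia.
    by rewrite qcoefO !addr0.
- case: k iK => [|k] iK.
  + rewrite qcoefO /= (qcoefE K 0) muln0 F0 (fE 1%N) // tm1.
    by rewrite !add0r !addr0.
  + have -> : ((2 * k.+1).+1 < 2)%N = false by lia.
    have -> : ((2 * k.+1).+1 == 0)%N = false by lia.
    have -> : ((2 * k.+1).+1 == 1)%N = false by lia.
    have -> : ((2 * k.+1).+1 < 3)%N = false by lia.
    have -> : ((2 * k.+1).+1 - 2 = (2 * k).+1)%N by lia.
    have -> : ((2 * k.+1).+1 - 3 = (2 * k))%N by lia.
    rewrite /= !qcoefE !qcoefO add0r !addr0 !fE; try lia.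
    rewrite !tm_odd.
    by rewrite addrACA add2F add0r.
Qed.
End TMcong.

Fixpoint inEf (k e : nat) : bool :=
  if k is k'.+1 then
    (if e is 0 then true else ((e %% 4 == 0) || (e %% 4 == 2)) && inEf k' (e %/ 4))
  else true.

Lemma inEf_stable k1 k2 e : e <= k1 -> e <= k2 -> inEf k1 e = inEf k2 e.
Proof.
elim: k1 k2 e => [|k1 IH] [|k2] [|e] //= h1 h2.
congr (_ && _); apply: IH; lia.
Qed.

Definition inE e := inEf e e.

Lemma div4_cases i : exists a s, s < 4 /\ i = 4 * a + s.
Proof. exists (i %/ 4), (i %% 4); lia. Qed.

Lemma inE_rec a s : s < 4 -> inE (4 * a + s) = ((s == 0) || (s == 2)) && inE a.
Proof.
move=> s4; rewrite /inE.
case E: (4 * a + s) => [|e].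
- have [-> ->] : a = 0 /\ s = 0 by lia. by [].
- rewrite /= -E.
  have -> : (4 * a + s) %% 4 = s by lia.
  have -> : (4 * a + s) %/ 4 = a by lia.
  congr (_ && _); apply: inEf_stable; lia.
Qed.

Lemma inE0 : inE 0. Proof. by []. Qed.

Section Pdefs.
Local Open Scope ring_scope.

Definition Pc (j : nat) : 'F_2 := ((j %% 4 == 0)%N && inE (j %/ 4))%:R.
Definition cs (m : nat) : 'F_2 := (inE (m.+1 %/ 4))%:R.

Lemma PcE a s : (s < 4)%N -> Pc (4 * a + s) = ((s == 0)%N && inE a)%:R.
Proof.
move=> s4; rewrite /Pc.
have -> : ((4 * a + s) %% 4 = s)%N by lia.
have -> : ((4 * a + s) %/ 4 = a)%N by lia.
by [].
Qed.

End Pdefs.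

Section Pcong.
Local Open Scope ring_scope.

Definition pP (M : nat) : {poly 'F_2} := \poly_(j < M) Pc j.

Lemma cP4 M j : (j < M)%N ->
  (pP M \Po 'X^4)`_j = if (j %% 4 == 0)%N then Pc (j %/ 4) else 0.
Proof.
move=> jM; rewrite coef_comp_poly_Xn // coef_poly.
have -> : (j %/ 4 < M)%N by lia.
by rewrite /dvdn.
Qed.

Lemma Pc_nz a s : (0 < s < 4)%N -> Pc (4 * a + s) = 0.
Proof. by move=> /andP [s0 s4]; rewrite PcE //; case: s s0 s4. Qed.

Lemma Pcong M : cong M (pP M) ((1 + 'X^8) * (pP M \Po 'X^4)).
Proof.
move=> i iM; rewrite mulrDl mul1r coefD coefXnM coef_poly iM (cP4 iM).
have [a [s [s4 Ei]]] := div4_cases i; subst i.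
case: s s4 iM => [|s] s4 iM.
- rewrite PcE //= addn0.
  have -> : (4 * a %% 4 == 0)%N by lia.
  have -> : (4 * a %/ 4 = a)%N by lia.
  have [b [t [t4 Ea]]] := div4_cases a; subst a.
  rewrite inE_rec // PcE //.
  case: t t4 iM => [|[|[|[|t]]]] // _ iM.
  + case: b iM => [|b] iM; first by rewrite /= addr0.
    have -> : (4 * (4 * b.+1 + 0) < 8)%N = false by lia.
    rewrite cP4; last by lia.
    have -> : ((4 * (4 * b.+1 + 0) - 8) %% 4 == 0)%N by lia.
    have -> : ((4 * (4 * b.+1 + 0) - 8) %/ 4 = 4 * b + 2)%N by lia.
    by rewrite Pc_nz ?addr0.
  + case: b iM => [|b] iM; first by rewrite /= addr0.
    have -> : (4 * (4 * b.+1 + 1) < 8)%N = false by lia.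
    rewrite cP4; last by lia.
    have -> : ((4 * (4 * b.+1 + 1) - 8) %% 4 == 0)%N by lia.
    have -> : ((4 * (4 * b.+1 + 1) - 8) %/ 4 = 4 * b + 3)%N by lia.
    by rewrite Pc_nz ?addr0.
  + have -> : (4 * (4 * b + 2) < 8)%N = false by lia.
    rewrite cP4; last by lia.
    have -> : ((4 * (4 * b + 2) - 8) %% 4 == 0)%N by lia.
    have -> : ((4 * (4 * b + 2) - 8) %/ 4 = 4 * b + 0)%N by lia.
    by rewrite PcE // add0r.
  + have -> : (4 * (4 * b + 3) < 8)%N = false by lia.
    rewrite cP4; last by lia.
    have -> : ((4 * (4 * b + 3) - 8) %% 4 == 0)%N by lia.
    have -> : ((4 * (4 * b + 3) - 8) %/ 4 = 4 * b + 1)%N by lia.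
    by rewrite Pc_nz ?addr0.
- have -> : ((4 * a + s.+1) %% 4 == 0)%N = false by lia.
  rewrite Pc_nz ?add0r; last by lia.
  case: ifP => // H8; rewrite cP4; last by lia.
  by have -> : ((4 * a + s.+1 - 8) %% 4 == 0)%N = false by lia.
Qed.

End Pcong.

Section Gcong.
Local Open Scope ring_scope.

Lemma Pc4 k : Pc (k + 3) + Pc (k + 2) + Pc (k + 1) + Pc k = (inE ((k + 3) %/ 4))%:R.
Proof.
have [a [s [s4 Ek]]] := div4_cases k; subst k.
case: s s4 => [|[|[|[|s]]]] // _.
- have -> : (4 * a + 0 + 3 = 4 * a + 3)%N by lia.
  have -> : (4 * a + 0 + 2 = 4 * a + 2)%N by lia.
  have -> : (4 * a + 0 + 1 = 4 * a + 1)%N by lia.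
  have -> : ((4 * a + 3) %/ 4 = a)%N by lia.
  by rewrite !PcE //= !add0r.
- have -> : (4 * a + 1 + 3 = 4 * (a + 1) + 0)%N by lia.
  have -> : (4 * a + 1 + 2 = 4 * a + 3)%N by lia.
  have -> : (4 * a + 1 + 1 = 4 * a + 2)%N by lia.
  have -> : ((4 * (a + 1) + 0) %/ 4 = a + 1)%N by lia.
  by rewrite !PcE //= !addr0.
- have -> : (4 * a + 2 + 3 = 4 * (a + 1) + 1)%N by lia.
  have -> : (4 * a + 2 + 2 = 4 * (a + 1) + 0)%N by lia.
  have -> : (4 * a + 2 + 1 = 4 * a + 3)%N by lia.
  have -> : ((4 * (a + 1) + 1) %/ 4 = a + 1)%N by lia.
  by rewrite !PcE //= !addr0 add0r.
- have -> : (4 * a + 3 + 3 = 4 * (a + 1) + 2)%N by lia.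
  have -> : (4 * a + 3 + 2 = 4 * (a + 1) + 1)%N by lia.
  have -> : (4 * a + 3 + 1 = 4 * (a + 1) + 0)%N by lia.
  have -> : ((4 * (a + 1) + 2) %/ 4 = a + 1)%N by lia.
  by rewrite !PcE //= !addr0 !add0r.
Qed.

Lemma Gcong N : cong N.+2 ('X * Gtrunc cs N)
  (pP N.+2 + 'X * pP N.+2 + 'X^2 * pP N.+2 + 'X^3 * pP N.+2 + 1 + 'X).
Proof.
move=> k kN; rewrite !coefD !coefXnM !coefXM coef1 coefX /Gtrunc.
have pE j : (j < N.+2)%N -> (pP N.+2)`_j = Pc j by move=> jN; rewrite /pP coef_poly jN.
case: k kN => [|[|[|k]]] kN.
- by rewrite /= pE // (PcE 0%N (s:=0%N)) //= !addr0 add2F.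
- rewrite /= !pE // (PcE 0%N (s:=1%N)) // (PcE 0%N (s:=0%N)) //= coef_poly /=.
  by rewrite !add0r !addr0 add2F.
- rewrite /= !pE // (PcE 0%N (s:=2%N)) // (PcE 0%N (s:=1%N)) // (PcE 0%N (s:=0%N)) //= coef_poly /=.
  have -> : (1 < N.+1)%N by lia.
  by rewrite /cs /= !add0r !addr0.
- rewrite /= !pE ?coef_poly; try lia.
  have -> : (k.+2 < N.+1)%N by lia.
  rewrite /cs -addn3 !addr0.
  rewrite addnK (_ : (k + 3 - 2 = k + 1)%N); last by lia.
  rewrite (_ : (k.+2 = k + 2)%N); last by lia.
  by rewrite Pc4.
Qed.
End Gcong.

Section Main.
Local Open Scope ring_scope.
Local Notation P := {poly 'F_2}.

Lemma cong_pow4 j (D : P) : cong j D 0 -> cong (4 * j) (D ^+ 4) 0.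
Proof.
move=> /congP [h]; rewrite add0r => ->; apply/congP.
by exists (h ^+ 4); rewrite add0r exprMn -exprM mulnC.
Qed.

Lemma frob_unique M (u D : P) : u`_0 = 1 -> cong M (D ^+ 4) (u * D) ->
  cong 1 D 0 -> cong M D 0.
Proof.
move=> u0 H D1.
suff: forall t, cong (minn t.+1 M) D 0.
  by move/(_ M); rewrite (minn_idPr (leqnSn M)).
elim=> [|t IH]; first by apply: cong_le D1; rewrite geq_minl.
case: (leqP M t.+1) => tM.
- have tM2 : (M <= t.+2)%N by apply: leq_trans tM _.
  by move: IH; rewrite (minn_idPr tM) (minn_idPr tM2).
- rewrite (minn_idPl (ltnW tM)) in IH.
  have H4 := cong_pow4 IH.
  have H5 : cong (minn (4 * t.+1) M) (u * D) 0.
    apply: cong_trans (cong_sym (cong_le (geq_minr _ _) H)) _.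
    exact: cong_le (geq_minl _ _) H4.
  have H6 := cong_cancel u0 H5.
  apply: cong_le H6; rewrite leq_min geq_minr andbT.
  by apply: leq_trans (geq_minl _ _) _; lia.
Qed.

Lemma comp1 (f : P) : 1 \Po f = 1.
Proof. by rewrite -polyC1 comp_polyC. Qed.

Lemma comp0coef (p f : P) : f`_0 = 0 -> cong 1 (p \Po f) (p`_0)%:P.
Proof.
move=> f0; rewrite -comp_poly0r; apply: cong_compr.
by move=> i; rewrite ltnS leqn0 => /eqP ->; rewrite f0 coef0.
Qed.

Lemma Tid (x f : P) : (1 + x) * ((1 + (1 + x) * f) ^+ 3 + 1 + f) =
  (1 + x) * f * ((1 + x) ^+ 2 * f + (1 + x) ^+ 3 * f ^+ 2 + x).
Proof.
have -> : (1 + x) * ((1 + (1 + x) * f) ^+ 3 + 1 + f) =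
  (1 + x) * f * ((1 + x) ^+ 2 * f + (1 + x) ^+ 3 * f ^+ 2 + x) + 2%:R * (1 + 2%:R*f + f^+2 + x + 3%:R*x*f + 3%:R*x*f^+2 + x^+2*f + 3%:R*x^+2*f^+2 + x^+3*f^+2) by ring.
by rewrite two0 mul0r addr0.
Qed.

Lemma T0cong K : let f := Ftrunc K in let T0 := 1 + (1 + 'X) * f in
  cong K.+1 (T0 ^+ 3) (1 + f).
Proof.
move=> f T0.
have E1 := @TMcong K.
rewrite -/f -comp_sqr comp_polyXr -cube1 -sq1 in E1.
have E2 : cong K.+1 ((1 + 'X) ^+ 2 * f + (1 + 'X) ^+ 3 * f ^+ 2 + 'X) 0.
  by rewrite -addrA; apply/cong0.
have E3 : cong K.+1 ((1 + 'X) * (T0 ^+ 3 + 1 + f)) 0.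
  rewrite Tid -(mulr0 ((1 + 'X) * f)); apply: cong_mul => //.
have E4 := cong_cancel _ E3.
rewrite coefD coef1 coefX addr0 in E4.
have E5 := E4 erefl.
by apply/cong0; rewrite addrA.
Qed.

Lemma cs_inverse N : cong N.+1 (Gtrunc cs N \Po Ftrunc N) 'X.
Proof.
set f := Ftrunc N.+1; set g := Gtrunc cs N; set p := pP N.+2.
have f0 : f`_0 = 0 by exact: F0.
have f1 : f`_1 = 1 by rewrite /f Fcoef tm1.
have Hb := cong_compl f0 (@Gcong N).
rewrite -/g -/p !comp_polyD !comp_polyM /= !comp_polyX comp1 in Hb.
have eqc n (a b : P) : a = b -> cong n a b by move=> ->.
set S := (1 + f) ^+ 3 * (p \Po f).
have Hb' : cong N.+2 (f * (g \Po f)) (S + 1 + f).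
  apply: cong_trans Hb _; apply: eqc; rewrite /S cube1; ring.
have Hc1 := @Pcong N.+2; rewrite -/p in Hc1.
have Hc2 : cong N.+2 (S ^+ 4) ((1 + f) * S).
  have -> : S ^+ 4 = (1 + f) ^+ 12 * (p \Po f) ^+ 4 by rewrite /S exprMn -exprM.
  rewrite comp_4.
  have -> : (1 + f) * S = (1 + f) ^+ 4 * (p \Po f) by rewrite /S mulrA -exprS.
  have H1 := cong_compl f0 Hc1.
  rewrite rmorphM rmorphD /= comp1 comp_Xn_poly -comp_polyA comp_Xn_poly in H1.
  apply: cong_sym; apply: cong_trans (cong_mul (eqc _ ((1 + f) ^+ 4) _ erefl) H1) _.
  by apply: eqc; rewrite -one8 mulrA -exprD.
set T0 := 1 + (1 + 'X) * f.
have Hc3 : cong N.+2 (T0 ^+ 4) ((1 + f) * T0).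
  rewrite exprSr; apply: cong_mul => //; move: (@T0cong N.+1) => /=; exact.
have HD : cong N.+2 (S + T0) 0.
  apply: (@frob_unique _ (1 + f)).
  - by rewrite coefD coef1 f0 addr0.
  - rewrite pow4D mulrDr; exact: cong_add.
  - have HS : cong 1 S 1.
      rewrite /S -[X in cong _ _ X](mulr1 1); apply: cong_mul.
      + have : cong 1 (1 + f) 1 by move=> [|i] // _; rewrite coefD f0 addr0.
        by move/(cong_exp 3); rewrite expr1n.
      + by apply: cong_trans (comp0coef _ f0) _; rewrite /p /pP coef_poly /= (PcE 0%N (s:=0%N)).
    have HT : cong 1 T0 1.
      by move=> [|i] // _; rewrite coefD coefM big_ord1 f0 mulr0 addr0.
    apply/cong0; apply: cong_trans HS (cong_sym HT).
have HST : cong N.+2 S T0 by apply/cong0.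
have Hd : cong N.+2 (f * (g \Po f)) ('X * f).
  apply: cong_trans Hb' _.
  have -> : 'X * f = T0 + 1 + f.
    rewrite /T0.
    have -> : 1 + (1 + 'X) * f + 1 + f = 'X * f + 2%:R * (1 + f) by ring.
    by rewrite two0 mul0r addr0.
  by apply: cong_add => //; apply: cong_add.
have fX := Xfactor f0; set f1' := drop_poly 1 f in fX.
have f1'0 : f1'`_0 = 1 by rewrite /f1' coef_drop_poly.
rewrite {1 3}fX -!mulrA in Hd.
have He := cong_X Hd.
have He2 : cong N.+1 (f1' * ((g \Po f) + 'X)) 0.
  by rewrite mulrDr (mulrC f1' 'X); apply/cong0.
have He3 := cong_cancel f1'0 He2.
have He4 : cong N.+1 (g \Po f) 'X by apply/cong0.
apply: cong_trans He4; apply: cong_compr => i iN.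
rewrite !Fcoef; have -> : (i <= N)%N by lia.
by have -> : (i <= N.+1)%N by lia.
Qed.

End Main.

Section Uniq.
Local Open Scope ring_scope.
Local Notation P := {poly 'F_2}.

Lemma coef_comp_wide n (p q : P) k : (size p <= n)%N ->
  (p \Po q)`_k = \sum_(i < n) p`_i * (q ^+ i)`_k.
Proof.
move=> sz; rewrite coef_comp_poly (big_ord_widen n (fun i => p`_i * (q ^+ i)`_k) sz).
rewrite big_mkcond; apply: eq_bigr => i _; case: ifP => // /negbT.
by rewrite -leqNgt => h; rewrite nth_default // mul0r.
Qed.

Lemma coef0X (f : P) n : (f ^+ n)`_0 = f`_0 ^+ n.
Proof. elim: n => [|n IH]; first by rewrite !expr0 coef1. by rewrite !exprS coef0M IH. Qed.

Lemma powXcoef (f : P) n : f`_0 = 0 -> (f ^+ n)`_n = f`_1 ^+ n.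
Proof.
move=> f0; rewrite {1}(Xfactor f0) exprMn coefXnM ltnn subnn coef0X.
by rewrite coef_drop_poly.
Qed.

Definition cz (c' : nat -> 'F_2) (i : nat) : 'F_2 := if i is 0 then 0 else c' i.

Lemma compN (c' : nat -> 'F_2) N :
  (Gtrunc c' N \Po Ftrunc N)`_N =
  \sum_(i < N) cz c' i * ((Ftrunc N) ^+ i)`_N +
  (if N is 0 then 0 else c' N).
Proof.
rewrite (@coef_comp_wide N.+1); last by rewrite /Gtrunc size_poly.
rewrite big_ord_recr /=; congr (_ + _).
- apply: eq_bigr => i _; rewrite /Gtrunc coef_poly.
  by have -> : (i < N.+1)%N by apply: leq_trans (ltn_ord i) _.
- rewrite /Gtrunc coef_poly ltnSn powXcoef ?F0 //.
  case: N => [|N]; first by rewrite mul0r.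
  by rewrite Fcoef tm1 expr1n mulr1.
Qed.

Lemma c_eq (c : nat -> 'F_2) : is_comp_inverse c -> forall m, (0 < m)%N -> c m = cs m.
Proof.
move=> Hc; elim/ltn_ind => m IH m0.
have H1 := (Hc m).1.
have H2 : (Gtrunc cs m \Po Ftrunc m)`_m = (m == 1%N)%:R.
  by rewrite (@cs_inverse m m) // coefX.
rewrite compN in H1; rewrite compN in H2.
rewrite -H2 in H1.
have Es : \sum_(i < m) cz c i * ((Ftrunc m) ^+ i)`_m =
          \sum_(i < m) cz cs i * ((Ftrunc m) ^+ i)`_m.
  apply: eq_bigr => -[[|i] hi] _ //=; rewrite IH //.
rewrite Es in H1.
move: (addrI _ H1); by case: m m0 IH {H1 H2 Es}.
Qed.

End Uniq.

Fixpoint spreadf (k r : nat) : nat :=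
  if k is k'.+1 then 4 * spreadf k' (r %/ 2) + 2 * (r %% 2) else 0.
Definition spread r := spreadf r r.

Lemma spreadf0 k : spreadf k 0 = 0.
Proof. by elim: k => //= k ->. Qed.

Lemma spreadf_stable k1 k2 r : r <= k1 -> r <= k2 -> spreadf k1 r = spreadf k2 r.
Proof.
elim: k1 k2 r => [|k1 IH] [|k2] r h1 h2 /=.
- by [].
- have -> : r = 0 by lia. by rewrite spreadf0.
- have -> : r = 0 by lia. by rewrite spreadf0.
- case: r h1 h2 => [|r] h1 h2; first by rewrite !spreadf0.
  congr (_ + _); congr (_ * _); apply: IH; lia.
Qed.

Lemma spread_rec r : spread r = 4 * spread (r %/ 2) + 2 * (r %% 2).
Proof.
case: r => [|r]; first by []. rewrite /spread /=.
congr (_ + _); congr (_ * _); apply: spreadf_stable; lia.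
Qed.

Lemma spread0 : spread 0 = 0. Proof. by []. Qed.

Lemma spread_add s a b : a < 2 ^ s -> spread (a + 2 ^ s * b) = spread a + 4 ^ s * spread b.
Proof.
elim: s a => [|s IH] a ha.
- have -> : a = 0 by rewrite expn0 in ha; lia.
  by rewrite spread0 expn0 !mul1n.
- rewrite spread_rec (spread_rec a) !expnS; rewrite expnS in ha.
  move: (IH (a %/ 2)); move: (2 ^ s) (4 ^ s) ha => x y ha IH'.
  have -> : (a + 2 * x * b) %/ 2 = a %/ 2 + x * b.
    rewrite -mulnA; move: (x * b) => z; lia.
  have -> : (a + 2 * x * b) %% 2 = a %% 2.
    rewrite -mulnA; move: (x * b) => z; lia.
  rewrite IH'; last by lia.
  ring.
Qed.

Lemma spread_ge r : 2 * r <= spread r.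
Proof.
elim/ltn_ind: r => r IH; case: r IH => [|r] IH; first by [].
rewrite spread_rec; have := IH (r.+1 %/ 2); lia.
Qed.

Fixpoint phi (b : nat) : nat := if b is b'.+1 then phi b' + inE b' else 0.

Lemma inE4 a s : s < 4 -> inE (4 * a + s) = ((s == 0) || (s == 2)) && inE a.
Proof. exact: inE_rec. Qed.

Lemma phi4 q : phi (4 * q) = 2 * phi q.
Proof.
elim: q => [|q IH]; first by [].
have -> : 4 * q.+1 = (4 * q).+4 by lia.
rewrite /= IH.
have -> : (4 * q).+3 = 4 * q + 3 by lia.
have -> : (4 * q).+2 = 4 * q + 2 by lia.
have -> : (4 * q).+1 = 4 * q + 1 by lia.
rewrite -{1}[4 * q]addn0 !inE4 //=; lia.
Qed.

Lemma phi42 q : phi (4 * q + 2) = 2 * phi q + inE q.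
Proof.
have -> : 4 * q + 2 = (4 * q).+2 by lia.
rewrite /= phi4.
have -> : (4 * q).+1 = 4 * q + 1 by lia.
have := @inE4 q 0 isT; rewrite addn0 => ->. rewrite inE4 //=; lia.
Qed.

Lemma spread_props r : inE (spread r) /\ phi (spread r) = r.
Proof.
elim/ltn_ind: r => r IH; case: r IH => [|r] IH; first by [].
rewrite spread_rec; have [IH1 IH2] := IH (r.+1 %/ 2) (ltac:(lia)).
have : r.+1 %% 2 < 2 by lia.
case E: (r.+1 %% 2) => [|[|k]] // _.
- rewrite muln0 addn0 -[4 * _]addn0 inE4 //= IH1 addn0 phi4 IH2; split=> //; lia.
- rewrite muln1 inE4 //= IH1 phi42 IH2 IH1; split=> //; lia.
Qed.

Definition Zb (c : nat -> 'F_2) (y : nat) : bool := (0 < y) && (c y == 0%R).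
Fixpoint cnt (c : nat -> 'F_2) (x : nat) : nat := if x is x'.+1 then cnt c x' + Zb c x' else 0.

Lemma d_mono (d : nat -> nat) : (forall n, d n < d n.+1) -> forall i j, i < j -> d i < d j.
Proof.
move=> H i; elim=> [|j IH] //= ij.
case: (ltngtP i j) => [h|h|->]; last by [].
- exact: ltn_trans (IH h) (H j).
- lia.
Qed.

Lemma d_lt (d : nat -> nat) : (forall n, d n < d n.+1) -> forall i j, d i < d j -> i < j.
Proof.
move=> H i j dij; case: (ltngtP i j) => // h.
- by have := d_mono H h; lia.
- by move: dij; rewrite h ltnn.
Qed.

Lemma cnt_const c a b : a <= b -> (forall y, a <= y < b -> ~~ Zb c y) -> cnt c b = cnt c a.
Proof.
elim: b => [|b IH] ab Hy; first by have -> : a = 0 by lia.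
case: (ltngtP a b.+1) ab => // [lt|->] _ //.
rewrite /= IH //; first by rewrite (negbTE (Hy b _)) ?addn0 //; lia.
- by move=> y /andP [h1 h2]; apply: Hy; lia.
Qed.

Lemma cnt_d c d : is_zero_enum c d -> forall k, cnt c (d k) = k.
Proof.
move=> [Hm Hr].
have Zr y : Zb c y -> exists n, d n = y.
  by move=> /andP [y0 /eqP cy]; apply/(Hr y).1; split.
have Zd n : Zb c (d n).
  have [h1 h2] := (Hr (d n)).2 (ex_intro _ n erefl).
  by rewrite /Zb h1 h2 eqxx.
elim=> [|k IH].
- rewrite (@cnt_const c 0) // => y /andP [_ yd]; apply/negP => /Zr [n dn].
  have : d 0 <= d n.
    case: n dn => [|n] dn //; exact: ltnW (d_mono Hm (isT : 0 < n.+1)).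
  lia.
- rewrite (@cnt_const c (d k).+1) //=.
  + by rewrite IH Zd addn1.
  + move=> y /andP [h1 h2]; apply/negP => /Zr [n dn]; subst y.
    have := d_lt Hm h1; have := d_lt Hm h2; lia.
Qed.

Lemma d_cnt c d : is_zero_enum c d -> forall x, Zb c x -> d (cnt c x) = x.
Proof.
move=> Hz x /andP [x0 /eqP cx].
have [n dn] := (Hz.2 x).1 (conj x0 cx).
by rewrite -dn (cnt_d Hz).
Qed.

Lemma Zb_cs c : (forall m, 0 < m -> c m = cs m) ->
  forall y, Zb c y = (0 < y) && ~~ inE (y.+1 %/ 4).
Proof.
move=> Hc [|y] //; rewrite /Zb Hc //= /cs.
by case: (inE _) => //=; rewrite oner_eq0.
Qed.

Lemma cnt_block c : (forall m, 0 < m -> c m = cs m) ->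
  forall b, cnt c (4 * b + 3) + 4 * phi b.+1 = 4 * b + 4.
Proof.
move=> Hc; have Z := Zb_cs Hc.
elim=> [|b IH].
- by rewrite /= !Z.
- have -> : 4 * b.+1 + 3 = (4 * b + 3).+4 by lia.
  rewrite /= !Z.
  have -> : (4 * b + 3).+1 %/ 4 = b.+1 by lia.
  have -> : (4 * b + 3).+2 %/ 4 = b.+1 by lia.
  have -> : (4 * b + 3).+3 %/ 4 = b.+1 by lia.
  have -> : (4 * b + 3).+4 %/ 4 = b.+1 by lia.
  move: IH; rewrite /=; case: (inE b.+1) => /=; lia.
Qed.

Lemma pigeon (A : nat -> nat) m : 0 < m -> exists i j, i < j <= m /\ A i %% m = A j %% m.
Proof.
move=> m0.
pose h := fun k : 'I_m.+1 => (Ordinal (ltn_pmod (A k) m0) : 'I_m).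
have : ~~ injectiveb h.
  apply/negP => /injectiveP inj; have := @leq_card _ _ h inj; by rewrite !card_ord ltnn.
case/injectivePn => x [y] xy hxy.
have E : A x %% m = A y %% m by move: hxy => /(congr1 val).
case: (ltngtP x y) => [lt|lt|eq].
- by exists x, y; rewrite lt /= -ltnS ltn_ord.
- by exists y, x; rewrite lt /= -ltnS ltn_ord.
- by move: xy; rewrite (val_inj eq) eqxx.
Qed.

Lemma good_r c d r : is_zero_enum c d -> (forall m, 0 < m -> c m = cs m) ->
  0 < r -> ~~ odd r -> zseq d (spread r - r) = 1 /\ 0 < spread r - r.
Proof.
move=> Hz Hc r0 er.
have Hge := spread_ge r.
have [Hu Hphi] := spread_props r.
set u := spread r in Hge Hu Hphi *.
have Hr2 : r %% 2 = 0 by rewrite modn2; move: er; case: (odd r).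
have Hu4 : u = 4 * spread (r %/ 2) by rewrite /u spread_rec Hr2 muln0 addn0.
have Hu1 : inE u.+1 = false.
  by rewrite Hu4 -addn1 inE4.
have Zx : Zb c (4 * u + 3).
  rewrite (Zb_cs Hc) /=.
  have -> : (4 * u + 3).+1 %/ 4 = u.+1 by lia.
  by rewrite Hu1 addn3.
have Hcnt := cnt_block Hc u.
have Hphi1 : phi u.+1 = r.+1 by rewrite /= Hphi Hu addn1.
rewrite Hphi1 in Hcnt.
have Hd := d_cnt Hz Zx.
have Ec : cnt c (4 * u + 3) = 4 * (u - r) by lia.
rewrite Ec in Hd.
split; last by lia.
rewrite /zseq Hd.
have -> : (4 * u + 3 + 1) %/ 4 = u.+1 by lia.
have : r %% 2 = 0 := Hr2. lia.
Qed.

Theorem mainTheorem13 (c : nat -> 'F_2) (d : nat -> nat) :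
  is_comp_inverse c -> is_zero_enum c d ->
  forall m : nat, (2 <= m)%N ->
    exists n : nat, (0 < n)%N /\ (m %| n)%N /\ zseq d n = 1%N.
Proof.
move=> Hci Hz m m2.
have Hc := c_eq Hci.
pose R k := 2 * (2 ^ k - 1).
pose Af k := spread (R k) - R k.
have [i [j [/andP [ij jm] Emod]]] := @pigeon Af m (ltnW m2).
pose y := 2 ^ (j - i) - 1.
pose r := 2 ^ i.+1 * y.
have pi : 0 < 2 ^ i by rewrite expn_gt0.
have pji : 2 <= 2 ^ (j - i).
  by rewrite -{1}(expn1 2) leq_exp2l //; lia.
have Ej : 2 ^ j = 2 ^ i * 2 ^ (j - i) by rewrite -expnD subnKC // ltnW.
have HRj : R j = R i + r.
  rewrite /R /r /y Ej expnS; move: (2 ^ i) (2 ^ (j - i)) pi pji => a b ha hb; nia.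
have HRi : R i < 2 ^ i.+1 by rewrite /R expnS; lia.
have Hsp : spread (R j) = spread (R i) + spread r.
  rewrite HRj spread_add // /r -(add0n (2 ^ i.+1 * y)) spread_add ?expn_gt0 //.
have r0 : 0 < r by rewrite /r muln_gt0 expn_gt0 /y; lia.
have er : ~~ odd r by rewrite /r expnS -mulnA oddM.
have [Hz1 Hpos] := @good_r c d r Hz Hc r0 er.
exists (spread r - r); split => //; split => //.
have g1 := spread_ge (R i); have g2 := spread_ge r.
have EA : Af j = Af i + (spread r - r) by rewrite /Af Hsp HRj; lia.
rewrite /dvdn; apply/eqP.
move: Emod; rewrite EA => /esym /eqP.
rewrite -{2}[Af i]addn0 eqn_modDl mod0n => /eqP.
by [].
Qed.
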